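(* Let $g,f\in\mathbb{Z}[[x]]$ with $g(0)=1$, $f(0)=0$ and $f'(0)\in\{1,-1\}$, and suppose the Riordan array $(g,f)$ is an involution, i.e. $g(x)g(f(x))=1$ and $f(f(x))=x$. Let $a(x)=\frac{x\,g(x)}{f(x)}$ (a formal power series with invertible constant term). Then the almost Riordan array $(a;g,f)$ is an involution in the group of almost Riordan arrays of first order.
   Context: All matrices are infinite lower-triangular with rows and columns indexed by $n,k\ge0$. $[x^n]h(x)$ denotes the coefficient of $x^n$ in $h$. The Riordan array $(g,f)$ is the matrix with entries $[x^n]g(x)f(x)^k$; it is an involution if $(g,f)^2=(1,x)$, equivalently $g(x)g(f(x))=1$ and $f(f(x))=x$. An almost Riordan array of first order $(a;g,f)$ has associated matrix $M$ with $M_{0,0}=a_0$, $M_{0,k}=0$ for $k\ge1$, $M_{n,0}=a_n$ for $n\ge1$, and $M_{n,k}=[x^{n-1}]\,g(x)f(x)^{k-1}$ for $n,k\ge1$; the product $(a;g,f)\cdot(b;u,v)=\big(b_0a+xg(x)\tilde b(f(x));\ g\,u(f),\ v(f)\big)$, $\tilde b(x)=(b(x)-b_0)/x$, corresponds to the matrix product. It is an involution if $M^2=I$. *)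

(* Defs.v *)
From HB Require Import structures.
From mathcomp Require Import all_boot all_order all_algebra.
Set Implicit Arguments. Unset Strict Implicit. Unset Printing Implicit Defensive.
Import Order.TTheory GRing.Theory Num.Theory.
Local Open Scope ring_scope.

(* A formal power series h in Z[[x]]; h n = [x^n] h. *)
Definition fps := nat -> int.

Definition fone : fps := fun n => (n == 0%N)%:Z.
Definition fX : fps := fun n => (n == 1%N)%:Z.

Definition fmul (p q : fps) : fps :=
  fun n => \sum_(i < n.+1) p i * q (n - i)%N.

Fixpoint fpow (p : fps) (k : nat) : fps :=
  if k is k'.+1 then fmul p (fpow p k') else fone.

(* Composition g(f(x)), meaningful when f 0 = 0 (then f^k has order >= k,
   so only k <= n contribute to [x^n]). *)
Definition fcomp (g f : fps) : fps :=
  fun n => \sum_(k < n.+1) g k * fpow f k n.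

Definition imat := nat -> nat -> int.

(* Product of lower-triangular matrices: (A B)_{n,k} = sum_{j <= n} A_{n,j} B_{j,k}
   (the terms j > n vanish since A is lower triangular). *)
Definition imatmul (A B : imat) : imat :=
  fun n k => \sum_(j < n.+1) A n j * B j k.

Definition imat1 : imat := fun n k => (n == k)%:Z.

Definition almost_riordan (a g f : fps) : imat :=
  fun n k =>
    if k == 0%N then a n
    else if n == 0%N then 0
    else fmul g (fpow f k.-1) n.-1.

Definition imat_involution (M : imat) : Prop :=
  forall n k, imatmul M M n k = imat1 n k.

(* Main.v *)
Require Import Defs.
From mathcomp Require Import all_boot all_order all_algebra.
From mathcomp Require Import ring zify.
Import GRing.Theory.
Local Open Scope ring_scope.
Set Implicit Arguments.

Definition tr (N : nat) (p : fps) : {poly int} := \poly_(i < N) p i.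
Definition eqN (N : nat) (P Q : {poly int}) := forall m, (m < N)%N -> P`_m = Q`_m.

Lemma sum_ext0 (F0 : nat -> int) n1 n2 : (n1 <= n2)%N ->
  (forall i, (n1 <= i)%N -> F0 i = 0) ->
  \sum_(i < n1) F0 i = \sum_(i < n2) F0 i.
Proof.
move=> le H.
rewrite -(big_mkord xpredT F0) -(big_mkord xpredT F0).
rewrite (big_cat_nat (leq0n n1) le) /= [X in _ + X]big1_seq ?addr0 //.
move=> i /andP[_]; rewrite mem_index_iota => /andP[h _]; exact: H.
Qed.

Lemma powX0 (F : {poly int}) : F`_0 = 0 -> forall i j, (j < i)%N -> (F ^+ i)`_j = 0.
Proof.
move=> F0; elim=> [|i IH] j //= lt.
rewrite exprS coefM; apply: big1 => l _.
case: (nat_of_ord l) (ltn_ord l) => [|l'] hl; first by rewrite F0 mul0r.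
rewrite IH ?mulr0 //; move: lt hl; lia.
Qed.

Lemma fmulE p q (P Q : {poly int}) m :
  (forall i, (i <= m)%N -> P`_i = p i) -> (forall i, (i <= m)%N -> Q`_i = q i) ->
  fmul p q m = (P * Q)`_m.
Proof.
move=> HP HQ; rewrite coefM /fmul; apply: eq_bigr => i _.
by rewrite HP ?HQ ?leq_subr // -ltnS ltn_ord.
Qed.

Lemma fpowE f (F : {poly int}) N : (forall i, (i < N)%N -> F`_i = f i) ->
  forall k m, (m < N)%N -> fpow f k m = (F ^+ k)`_m.
Proof.
move=> HF; elim=> [|k IH] m lt /=.
  by rewrite expr0 coef1 /fone; case: (m == 0%N).
rewrite exprS; apply: fmulE => i hi.
  by rewrite HF // (leq_ltn_trans hi lt).
by rewrite IH // (leq_ltn_trans hi lt).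
Qed.

Lemma comp_sum (Q F : {poly int}) m : F`_0 = 0 ->
  eqN m.+1 (Q \Po F) (\sum_(i < m.+1) Q`_i *: F ^+ i).
Proof.
move=> F0 j lt; rewrite comp_polyE !coef_sum.
under eq_bigr do rewrite coefZ.
under [RHS]eq_bigr do rewrite coefZ.
rewrite (@sum_ext0 (fun i => Q`_i * (F^+i)`_j) (size Q) (size Q + m.+1)) ?leq_addr //;
  last by move=> i h; rewrite nth_default // mul0r.
rewrite (@sum_ext0 (fun i => Q`_i * (F^+i)`_j) m.+1 (size Q + m.+1)) ?leq_addl //.
by move=> i h; rewrite powX0 ?mulr0 // (leq_trans lt h).
Qed.

Lemma eqN_refl N P : eqN N P P. Proof. by []. Qed.
Lemma eqN_sym N P Q : eqN N P Q -> eqN N Q P.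
Proof. by move=> h m lt; rewrite h. Qed.
Lemma eqN_trans N P Q R : eqN N P Q -> eqN N Q R -> eqN N P R.
Proof. by move=> h1 h2 m lt; rewrite h1 ?h2. Qed.
Lemma eqN_le N M P Q : (M <= N)%N -> eqN N P Q -> eqN M P Q.
Proof. by move=> le h m lt; rewrite h // (leq_trans lt le). Qed.
Lemma eqN_add N P P' Q Q' : eqN N P P' -> eqN N Q Q' -> eqN N (P + Q) (P' + Q').
Proof. by move=> h1 h2 m lt; rewrite !coefD h1 ?h2. Qed.
Lemma eqN_mul N P P' Q Q' : eqN N P P' -> eqN N Q Q' -> eqN N (P * Q) (P' * Q').
Proof.
move=> h1 h2 m lt; rewrite !coefM; apply: eq_bigr => i _.
have him : (i <= m)%N by rewrite -ltnS ltn_ord.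
rewrite h1 ?h2 //; first by apply: leq_ltn_trans (leq_subr _ _) lt.
exact: leq_ltn_trans him lt.
Qed.
Lemma eqN_exp N P Q k : eqN N P Q -> eqN N (P ^+ k) (Q ^+ k).
Proof.
move=> h; elim: k => [|k IH]; first by rewrite !expr0.
by rewrite !exprS; apply: eqN_mul.
Qed.
Lemma eqN_comp N (F P P' : {poly int}) : F`_0 = 0 -> eqN N P P' -> eqN N (P \Po F) (P' \Po F).
Proof.
move=> F0 h m lt; apply/eqP; rewrite -subr_eq0 -coefB -comp_polyB comp_polyE coef_sum.
apply/eqP; apply: big1 => i _; rewrite coefZ coefB.
case: (ltnP i N) => hi; first by rewrite h // subrr mul0r.
by rewrite powX0 ?mulr0 // (leq_trans lt hi).
Qed.
Lemma eqN_Xinv N P Q : eqN N.+1 ('X * P) ('X * Q) -> eqN N P Q.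
Proof. by move=> h m lt; have := h m.+1 lt; rewrite !coefXM. Qed.

Lemma comp_pow (P F : {poly int}) k : (P ^+ k) \Po F = (P \Po F) ^+ k.
Proof.
elim: k => [|k IH]; first by rewrite !expr0 -polyC1 comp_polyC.
by rewrite !exprS comp_polyM IH.
Qed.

Lemma sumcomp (G Q F : {poly int}) m : F`_0 = 0 ->
  \sum_(i < m.+1) (G * F ^+ i)`_m * Q`_i = (G * (Q \Po F))`_m.
Proof.
move=> F0.
rewrite (eqN_mul (@eqN_refl m.+1 G) (@comp_sum Q F m F0) m (ltnSn m)) mulr_sumr coef_sum.
by apply: eq_bigr => i _; rewrite -scalerAr coefZ mulrC.
Qed.

Unset Implicit Arguments.
Theorem mainTheorem10 (g f : fps) :
  g 0%N = 1 ->
  f 0%N = 0 ->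
  (f 1%N = 1 \/ f 1%N = -1) ->
  (forall n, fmul g (fcomp g f) n = fone n) ->
  (forall n, fcomp f f n = fX n) ->
  forall a : fps, (forall n, fmul a f n = fmul fX g n) ->
  imat_involution (almost_riordan a g f).
Proof.
move=> g0 f0 f1 Hgf Hff a Ha n k.
pose N := n.+2.
pose G := tr N g. pose F := tr N f. pose A := tr N a.
pose At := tr N (fun i => a i.+1).
have trE p i : (i < N)%N -> (tr N p)`_i = p i by move=> h; rewrite coef_poly h.
have F0 : F`_0 = 0 by rewrite trE.
have powE j m : (m < N)%N -> fpow f j m = (F ^+ j)`_m.
  by apply: fpowE => i h; exact: trE.
have compE p m : (m < N)%N -> fcomp p f m = ((tr N p) \Po F)`_m.
  move=> lt; rewrite (@comp_sum (tr N p) F m F0 m (ltnSn m)) coef_sum /fcomp.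
  apply: eq_bigr => i _; rewrite coefZ trE ?powE //.
  exact: leq_trans (ltn_ord i) lt.
have E1 : eqN N (G * (G \Po F)) 1.
  move=> m lt; rewrite -(@fmulE g (fcomp g f) G (G \Po F)) ?Hgf ?coef1 /fone.
  - by case: (m == 0%N).
  - by move=> i hi; rewrite trE // (leq_ltn_trans hi lt).
  - by move=> i hi; rewrite compE // (leq_ltn_trans hi lt).
have E2 : eqN N (F \Po F) 'X.
  by move=> m lt; rewrite -compE // Hff coefX /fX; case: (m == 1%N).
have E3 : eqN N (A * F) ('X * G).
  move=> m lt; rewrite -(@fmulE a f A F) ?Ha.
  - apply: fmulE => i hi; last by rewrite trE // (leq_ltn_trans hi lt).
    by rewrite coefX /fX; case: (i == 1%N).
  - by move=> i hi; rewrite trE // (leq_ltn_trans hi lt).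
  - by move=> i hi; rewrite trE // (leq_ltn_trans hi lt).
have ME i m : (m.+1 < N)%N -> almost_riordan a g f m.+1 i.+1 = (G * F ^+ i)`_m.
  move=> lt; rewrite /almost_riordan /=; apply: fmulE => j hj.
    by rewrite trE // (leq_trans (leq_ltn_trans hj (ltnSn m)) (ltnW lt)).
  by rewrite powE // (leq_trans (leq_ltn_trans hj (ltnSn m)) (ltnW lt)).
case: k => [|k].
-
  have S1 : eqN N ((A \Po F) * (F \Po F)) (F * (G \Po F)).
    by have := eqN_comp F F0 E3; rewrite !comp_polyM comp_polyX.
  have S2 : eqN N ('X * (A * (A \Po F))) ('X * 1).
    have e1 : 'X * (A * (A \Po F)) = A * ((A \Po F) * 'X) by ring.
    rewrite e1; apply: eqN_trans (_ : eqN N _ (A * ((A \Po F) * (F \Po F)))) _.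
      by apply: eqN_mul => //; apply: eqN_mul => //; apply: eqN_sym.
    apply: eqN_trans (_ : eqN N _ (A * (F * (G \Po F)))) _.
      by apply: eqN_mul.
    have e2 : A * (F * (G \Po F)) = (A * F) * (G \Po F) by ring.
    rewrite e2; apply: eqN_trans (_ : eqN N _ (('X * G) * (G \Po F))) _.
      by apply: eqN_mul.
    rewrite -mulrA; by apply: eqN_mul.
  have S3 : eqN n.+1 (A * (A \Po F)) 1 := eqN_Xinv _ _ S2.
  have S4 : eqN N A ((a 0%N)%:P + 'X * At).
    move=> m lt; rewrite coefD coefC coefXM trE //.
    case: m lt => [|m] lt /=; first by rewrite addr0.
    by rewrite add0r trE // ltnW.
  have S5 : eqN N (A \Po F) ((a 0%N)%:P + F * (At \Po F)).
    by have := eqN_comp F F0 S4; rewrite comp_polyD comp_polyC comp_polyM comp_polyX.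
  have W : eqN n.+1 ((a 0%N)%:P * A + 'X * (G * (At \Po F))) 1.
    apply: eqN_trans S3; apply: eqN_sym; apply: (eqN_le _ (leqnSn _)).
    apply: eqN_trans (_ : eqN N _ (A * ((a 0%N)%:P + F * (At \Po F)))) _.
      by apply: eqN_mul.
    have e : A * ((a 0%N)%:P + F * (At \Po F)) = (a 0%N)%:P * A + (A * F) * (At \Po F) by ring.
    rewrite e; apply: eqN_add => //.
    have e' : 'X * (G * (At \Po F)) = ('X * G) * (At \Po F) by ring.
    by rewrite e'; apply: eqN_mul.
  have := W n (ltnSn n); rewrite coefD coefCM coefXM coef1 trE //.
  rewrite /imatmul /imat1 big_ord_recl /=.
  have M0 j : almost_riordan a g f j 0%N = a j by [].
  rewrite M0 M0 => Wn; transitivity ((n == 0%N)%:R : int); last by case: (n == 0%N).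
  rewrite -{}Wn mulrC; congr (_ + _).
  case En : n => [|m] /=; first by rewrite big_ord0.
  have lt : (m.+1 < N)%N by rewrite /N En.
  rewrite -(@sumcomp G At F m F0); apply: eq_bigr => i _.
  rewrite M0 ME // trE //.
  by apply: leq_trans (ltn_ord i) _; rewrite /N En; apply: leq_trans (leqnSn _) (leqnSn _).
- rewrite /imatmul /imat1 big_ord_recl.
  have -> : almost_riordan a g f 0%N k.+1 = 0 by [].
  rewrite mulr0 add0r.
  case En : n => [|m]; first by rewrite big_ord0.
  have lt : (m.+1 < N)%N by rewrite /N En.
  rewrite (eq_bigr (fun i : 'I_m.+1 => (G * F ^+ i)`_m * (G * F ^+ k)`_i)); last first.
    move=> i _; rewrite ME // ME //.
    by apply: leq_ltn_trans lt; rewrite ltn_ord.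
  rewrite (@sumcomp G (G * F ^+ k) F m F0) comp_polyM comp_pow mulrA.
  rewrite (eqN_mul E1 (eqN_exp k E2)) ?mul1r ?coefXn; last by apply: ltn_trans lt.
  by rewrite eqSS; case: (m == k).
Qed.
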